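(* Let $\mathbf{z}=(\mathbf{x},y)$ and $\mathbf{z}'=(\mathbf{x}',y')$ be drawn independently from a distribution $\mathbb{P}$ on $\mathcal{X}\times\{-1,+1\}$, let $p=\Pr(y=1)\in(0,1)$, and let $h(\mathbf{w};\mathbf{x})$ be a scoring function parameterized by $\mathbf{w}\in\mathbb{R}^d$ with $0\le h(\mathbf{w};\mathbf{x})\le 1$. Define $$P(\mathbf{w})=\mathbb{E}_{\mathbf{z},\mathbf{z}'}\left[(1-h(\mathbf{w};\mathbf{x})+h(\mathbf{w};\mathbf{x}'))^2\,\middle\vert\, y=1,y'=-1\right]$$ and, for $\mathbf{w}\in\mathbb{R}^d$, $a,b,\alpha\in\mathbb{R}$, $$F(\mathbf{w},a,b,\alpha;\mathbf{z})=(1-p)(h(\mathbf{w};\mathbf{x})-a)^2\mathbb{I}_{[y=1]}+p(h(\mathbf{w};\mathbf{x})-b)^2\mathbb{I}_{[y=-1]}+2(1+\alpha)\big(p\,h(\mathbf{w};\mathbf{x})\mathbb{I}_{[y=-1]}-(1-p)h(\mathbf{w};\mathbf{x})\mathbb{I}_{[y=1]}\big)-p(1-p)\alpha^2,$$ $f(\mathbf{w},a,b,\alpha)=\mathbb{E}_{\mathbf{z}}[F(\mathbf{w},a,b,\alpha;\mathbf{z})]$. Then the problem $\min_{\mathbf{w}\in\mathbb{R}^d}P(\mathbf{w})$ is equivalent to the saddle-point problem $\min_{\mathbf{w}\in\mathbb{R}^d,(a,b)\in\mathbb{R}^2}\max_{\alpha\in\mathbb{R}} f(\mathbf{w},a,b,\alpha)$,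 in the sense that for every $\mathbf{w}\in\mathbb{R}^d$, $$P(\mathbf{w})=1+\frac{1}{p(1-p)}\min_{(a,b)\in\mathbb{R}^2}\max_{\alpha\in\mathbb{R}}f(\mathbf{w},a,b,\alpha).$$
   Context: $\mathbb{I}_{[\cdot]}$ denotes the indicator function. The expectation conditioned on $y=1,y'=-1$ is over the independent pair $(\mathbf{z},\mathbf{z}')$. *)

(* Defs.v *)
From mathcomp Require Import all_boot all_order all_algebra.
From mathcomp Require Import all_classical all_reals all_analysis.
Set Implicit Arguments. Unset Strict Implicit. Unset Printing Implicit Defensive.
Import Order.TTheory GRing.Theory Num.Theory.
Local Open Scope ring_scope.
Local Open Scope classical_set_scope.

(* Labels: [true] stands for y = +1, [false] for y = -1.
   The data distribution is a probability measure [mu] on X * bool. *)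

Section AUC.
Context {dX : measure_display} {X : measurableType dX} {R : realType} {d : nat}.
Variable mu : probability (X * bool)%type R.
Variable h : 'rV[R]_d -> X -> R.

Definition ind (b : bool) : R := if b then 1 else 0.

Definition pos_prob : R := fine (mu [set z | z.2 = true]).

(* Expectation over the independent pair (z, z') drawn from mu x mu,
   conditioned on y = 1, y' = -1:
   E[g | y=1, y'=-1] = E[g 1[y=1] 1[y'=-1]] / (p (1 - p)). *)
Definition cond_pair_exp (g : X -> X -> R) : R :=
  (Rintegral mu setT (fun z => Rintegral mu setT (fun z' =>
      g z.1 z'.1 * ind z.2 * ind (~~ z'.2))))
  / (pos_prob * (1 - pos_prob)).

Definition AUC_P (w : 'rV[R]_d) : R :=
  cond_pair_exp (fun x x' => (1 - h w x + h w x') ^+ 2).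

Definition AUC_F (w : 'rV[R]_d) (a b alpha : R) (z : X * bool) : R :=
  let p := pos_prob in
  (1 - p) * (h w z.1 - a) ^+ 2 * ind z.2
  + p * (h w z.1 - b) ^+ 2 * ind (~~ z.2)
  + 2 * (1 + alpha) * (p * h w z.1 * ind (~~ z.2) - (1 - p) * h w z.1 * ind z.2)
  - p * (1 - p) * alpha ^+ 2.

Definition AUC_f (w : 'rV[R]_d) (a b alpha : R) : R :=
  Rintegral mu setT (AUC_F w a b alpha).

End AUC.

Definition is_max_over {R : realType} (phi : R -> R) (v : R) : Prop :=
  (exists alpha, phi alpha = v) /\ (forall alpha, phi alpha <= v).

(* Main.v *)
Require Import Defs.
From mathcomp Require Import all_boot all_order all_algebra.
From mathcomp Require Import all_classical all_reals all_analysis.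
From mathcomp Require Import measurable_realfun.
From mathcomp Require Import ring lra.
Import Order.TTheory GRing.Theory Num.Theory.
Local Open Scope ring_scope.
Local Open Scope classical_set_scope.

Section S.
Context {dX : measure_display} {X : measurableType dX} {R : realType} (mu : probability (X * bool)%type R).

Definition good (f : X * bool -> R) := measurable_fun setT f /\ exists M, forall x, `|f x| <= M.

Lemma good_int f : good f -> mu.-integrable setT (EFin \o f).
Proof.
move=> [mf [M hM]].
apply: (@le_integrable _ _ _ mu setT _ _ (EFin \o cst M)) => //.
- exact/measurable_EFinP.
- move=> x _ /=; rewrite !lee_fin. exact: (le_trans (hM x) (ler_norm _)).
- exact: finite_measure_integrable_cst.
Qed.

Lemma good_cst c : good (fun _ => c).
Proof. split => //; exists `|c| => //. Qed.

Lemma good_add f g : good f -> good g -> good (fun x => f x + g x).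
Proof.
move=> [mf [M hM]] [mg [N hN]]; split; first exact: measurable_funD.
exists (M + N) => x; apply: (le_trans (ler_normD _ _)); exact: lerD.
Qed.

Lemma good_mul f g : good f -> good g -> good (fun x => f x * g x).
Proof.
move=> [mf [M hM]] [mg [N hN]]; split; first exact: measurable_funM.
exists (M * N) => x; rewrite normrM; apply: ler_pM => //.
Qed.

Lemma good_opp f : good f -> good (fun x => - f x).
Proof.
move=> [mf [M hM]]; split; first exact: measurableT_comp.
by exists M => x; rewrite normrN.
Qed.

Lemma good_ind : good (fun z => ind z.2).
Proof.
split.
  apply: measurableT_comp => //.
exists 1 => x; rewrite /ind; case: ifP => _; rewrite ?normr1 ?normr0 //.
Qed.

Lemma good_indn : good (fun z => ind (~~ z.2)).
Proof.
split.
  by do 2 apply: measurableT_comp => //.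
exists 1 => x; rewrite /ind; case: ifP => _; rewrite ?normr1 ?normr0 //.
Qed.

Lemma E_ind : Rintegral mu setT (fun z => ind z.2) = pos_prob mu.
Proof.
rewrite /Rintegral /pos_prob.
rewrite (eq_integral (fun z => (\1_[set z : X * bool | z.2 = true] z)%:E)); last first.
  by move=> z _; rewrite /ind indicE; case: z => x [] /=; [rewrite mem_set | rewrite memNset].
rewrite integral_indic ?setIT //.
rewrite (_ : [set z : X * bool | z.2 = true] = snd @^-1` [set true]) //.
by rewrite -[X in measurable X]setTI; exact: measurable_snd.
Qed.

Lemma good_int' f : good f -> mu.-integrable setT (EFin \o f).
Proof. exact: good_int. Qed.

Lemma Elin f g : good f -> good g ->
  Rintegral mu setT (fun x => f x + g x) = Rintegral mu setT f + Rintegral mu setT g.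
Proof. by move=> gf gg; rewrite RintegralD //; apply: good_int. Qed.

Lemma EZ f c : good f ->
  Rintegral mu setT (fun x => c * f x) = c * Rintegral mu setT f.
Proof. by move=> gf; rewrite RintegralZl //; apply: good_int. Qed.

Lemma Ecst c : Rintegral mu setT (fun _ => c) = c.
Proof.
rewrite Rintegral_cst // (_ : fine (mu setT) = 1) ?mulr1 //.
exact: (congr1 fine (probability_setT mu)).
Qed.

Lemma E_indn : Rintegral mu setT (fun z => ind (~~ z.2)) = 1 - pos_prob mu.
Proof.
rewrite (@eq_Rintegral _ _ _ mu setT (fun z => 1 + (-1) * ind z.2)); last first.
  by move=> [x []] _ /=; rewrite /ind /=; ring.
rewrite Elin ?EZ ?Ecst ?E_ind; [ring| exact: good_ind| exact: good_cst|].
apply: good_mul; [exact: good_cst| exact: good_ind].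
Qed.

End S.

Ltac gd := repeat first [ exact: good_ind | exact: good_indn | exact: good_cst
  | apply: good_add | apply: good_mul | apply: good_opp ].


Theorem proposition1 (dX : measure_display) (X : measurableType dX)
  (R : realType) (d : nat) (mu : probability (X * bool)%type R)
  (h : 'rV[R]_d -> X -> R)
  (h_meas : forall w, measurable_fun setT (h w))
  (h_range : forall w x, 0 <= h w x <= 1)
  (p_range : 0 < pos_prob mu < 1) :
  forall w : 'rV[R]_d,
    exists g : R -> R -> R,
      (forall a b, is_max_over (fun alpha => AUC_f mu h w a b alpha) (g a b)) /\
      exists a0 b0 : R,
        (forall a b, g a0 b0 <= g a b) /\
        AUC_P mu h w = 1 + (pos_prob mu * (1 - pos_prob mu))^-1 * g a0 b0.
Proof.
move=> w.
have gH : good (fun z : X * bool => h w z.1).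
  split; first exact: measurableT_comp (h_meas w) measurable_fst.
  exists 1 => z; have /andP[h0 h1] := h_range w z.1.
  by rewrite ger0_norm.
set p := pos_prob mu.
set E := Rintegral mu setT.
set m1 := E (fun z => h w z.1 * ind z.2).
set m0 := E (fun z => h w z.1 * ind (~~ z.2)).
set s1 := E (fun z => h w z.1 ^+ 2 * ind z.2).
set s0 := E (fun z => h w z.1 ^+ 2 * ind (~~ z.2)).
have Ef : forall a b al, AUC_f mu h w a b al =
   (1 - p) * s1 + (-2 * a * (1 - p)) * m1 + (a ^+ 2 * (1 - p)) * p
   + p * s0 + (-2 * b * p) * m0 + (b ^+ 2 * p) * (1 - p)
   + (2 * (1 + al) * p) * m0 + (- 2 * (1 + al) * (1 - p)) * m1
   - p * (1 - p) * al ^+ 2.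
  move=> a b al; rewrite /AUC_f.
  rewrite (@eq_Rintegral _ _ _ mu setT (fun z =>
     (1 - p) * (h w z.1 ^+ 2 * ind z.2) + (-2 * a * (1 - p)) * (h w z.1 * ind z.2)
     + (a ^+ 2 * (1 - p)) * ind z.2
     + p * (h w z.1 ^+ 2 * ind (~~ z.2)) + (-2 * b * p) * (h w z.1 * ind (~~ z.2))
     + (b ^+ 2 * p) * ind (~~ z.2)
     + (2 * (1 + al) * p) * (h w z.1 * ind (~~ z.2))
     + (- 2 * (1 + al) * (1 - p)) * (h w z.1 * ind z.2)
     + (fun _ => - (p * (1 - p) * al ^+ 2)) z)); last first.
    move=> z _; rewrite /AUC_F /= -/p. clearbody p. ring.
  rewrite !Elin; try by gd.
  rewrite !EZ; try by gd.
  by rewrite Ecst E_ind E_indn.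
have EP : AUC_P mu h w = ((1 - p + 2 * m0 + s0) * p + (-2 * (1 - p) - 2 * m0) * m1
     + (1 - p) * s1) / (p * (1 - p)).
  rewrite /AUC_P /cond_pair_exp -/p; congr (_ / _).
  have inner : forall z : X * bool, Rintegral mu setT (fun z' =>
       (1 - h w z.1 + h w z'.1) ^+ 2 * ind z.2 * ind (~~ z'.2)) =
     ((1 - h w z.1) ^+ 2 * ind z.2) * (1 - p) + (2 * (1 - h w z.1) * ind z.2) * m0
     + ind z.2 * s0.
    move=> z.
    rewrite (@eq_Rintegral _ _ _ mu setT (fun z' =>
       ((1 - h w z.1) ^+ 2 * ind z.2) * ind (~~ z'.2)
       + (2 * (1 - h w z.1) * ind z.2) * (h w z'.1 * ind (~~ z'.2))
       + ind z.2 * (h w z'.1 ^+ 2 * ind (~~ z'.2)))); last first.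
      by move=> z' _; ring.
    rewrite !Elin; try by gd.
    rewrite !EZ; try by gd.
    by rewrite E_indn.
  rewrite (@eq_Rintegral _ _ _ mu setT (fun z =>
       (1 - p + 2 * m0 + s0) * ind z.2 + (-2 * (1 - p) - 2 * m0) * (h w z.1 * ind z.2)
       + (1 - p) * (h w z.1 ^+ 2 * ind z.2))); last first.
    move=> z _; rewrite inner; clearbody p m0 s0; ring.
  rewrite !Elin; try by gd.
  rewrite !EZ; try by gd.
  by rewrite E_ind.
have /andP[p0 p1] : 0 < p < 1 by [].
have pn0 : p != 0 by rewrite gt_eqF.
have p1' : 0 < 1 - p by rewrite subr_gt0.
have qn0 : 1 - p != 0 by rewrite gt_eqF.
have q0 : 0 < p * (1 - p) by rewrite mulr_gt0.
clearbody p E m1 m0 s1 s0.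
set c := p * m0 - (1 - p) * m1.
pose g := fun a b => (1 - p) * s1 + (-2 * a * (1 - p)) * m1 + (a ^+ 2 * (1 - p)) * p
   + p * s0 + (-2 * b * p) * m0 + (b ^+ 2 * p) * (1 - p) + 2 * c
   + c ^+ 2 / (p * (1 - p)).
exists g; split.
  move=> a b; split.
    exists (c / (p * (1 - p))); rewrite Ef /g /c; field; exact/andP.
  move=> al; rewrite Ef -subr_ge0.
  rewrite (_ : g a b - _ = (c - p * (1 - p) * al) ^+ 2 / (p * (1 - p))).
    by apply: divr_ge0; [exact: sqr_ge0 | exact: ltW].
  rewrite /g /c; field; exact/andP.
exists (m1 / p), (m0 / (1 - p)); split.
  move=> a b; rewrite -subr_ge0.
  rewrite (_ : g a b - _ = p * (1 - p) * ((a - m1 / p) ^+ 2 + (b - m0 / (1 - p)) ^+ 2)).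
    by apply: mulr_ge0; [exact: ltW | apply: addr_ge0; exact: sqr_ge0].
  rewrite /g /c; field; exact/andP.
rewrite EP /g /c; field; exact/andP.
Qed.
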